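(* For every positive integer $h$ there exists $N$ such that if $G$ is a graph with $|V(G)|\ge N$ which is neither complete nor edgeless, then $G$ contains an induced subgraph $J$ such that $|V(J)|=h$ and either $J$ or $\bar J$ is a star or has exactly one edge.
   Context: All graphs are finite and simple; $\bar J$ denotes the complement of $J$; a star is a complete bipartite graph $K_{1,m}$. *)

(* Defs.v *)
(* A finite simple graph is a finType T of vertices with a
   symmetric irreflexive adjacency relation e : rel T. *)
From mathcomp Require Import all_boot.
Set Implicit Arguments. Unset Strict Implicit. Unset Printing Implicit Defensive.

Definition compl_rel (T : finType) (e : rel T) : rel T :=
  fun x y => (x != y) && ~~ e x y.

Definition induced_star (T : finType) (e : rel T) (S : {set T}) : Prop :=
  exists2 c, c \in S &
    forall x y, x \in S -> y \in S -> x != y -> (e x y <-> (x = c \/ y = c)).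

Definition induced_one_edge (T : finType) (e : rel T) (S : {set T}) : Prop :=
  exists a b, [/\ a \in S, b \in S, a != b, e a b &
    forall x y, x \in S -> y \in S -> e x y ->
      (x = a /\ y = b) \/ (x = b /\ y = a)].

(* Main.v *)
Require Import Defs.
From mathcomp Require Import all_boot.
From mathcomp Require Import zify.

Set Implicit Arguments. Unset Strict Implicit. Unset Printing Implicit Defensive.

Definition indep (T : finType) (r : rel T) (S : {set T}) : Prop :=
  forall x y, x \in S -> y \in S -> ~~ r x y.

Lemma sub_card (T : finType) (n : nat) (A : {set T}) :
  n <= #|A| -> exists2 K : {set T}, K \subset A & #|K| = n.
Proof.
elim: n => [|n IH] H.
  by exists set0; rewrite ?sub0set ?cards0.
have [K sKA cK] := IH (ltnW H).
have : A :\: K != set0.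
  rewrite -card_gt0 cardsD (setIidPr sKA); lia.
case/set0Pn => z; rewrite inE => /andP [zK zA].
exists (z |: K); first by rewrite subUset sub1set zA.
by rewrite cardsU1 zK cK.
Qed.

Lemma ramsey (T : finType) (e : rel T) : symmetric e -> irreflexive e ->
  forall a b (A : {set T}), 2 ^ (a + b) <= #|A| ->
  exists S : {set T}, S \subset A /\
    ((a <= #|S| /\ indep e S) \/ (b <= #|S| /\ indep (compl_rel e) S)).
Proof.
move=> es ei.
elim=> [|a IHa] b A H.
  exists set0; split; first exact: sub0set.
  by left; split => // x y; rewrite inE.
elim: b A H => [|b IHb] A H.
  exists set0; split; first exact: sub0set.
  by right; split => // x y; rewrite inE.
have : A != set0 by rewrite -card_gt0; move: H; rewrite expnS; lia.
case/set0Pn => v vA.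
set N := [set x in A | (x != v) && e v x].
set M := [set x in A | (x != v) && ~~ e v x].
have HNM : #|A| <= #|N| + #|M| + 1.
  have sub : A \subset (N :|: M) :|: [set v].
    apply/subsetP => x xA; rewrite !inE xA /=.
    by case: (x =P v) => //=; case: (e v x).
  apply: leq_trans (subset_leq_card sub) _.
  apply: leq_trans (leq_card_setU _ _) _; rewrite cards1 leq_add2r.
  exact: leq_card_setU.
have [HM | HN] : 2 ^ (a + b.+1) <= #|M| \/ 2 ^ (a.+1 + b) <= #|N|.
  move: H HNM; rewrite addSn expnS addnS expnS; lia.
- have [S [sSM [[cS iS] | [cS iS]]]] := IHa _ _ HM.
  + have vS : v \notin S.
      apply/negP => /(subsetP sSM); by rewrite inE eqxx andbF.
    exists (v |: S); split.
      rewrite subUset sub1set vA; apply/subsetP => x /(subsetP sSM).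
      by rewrite inE; case/andP.
    left; split; first by rewrite cardsU1 vS.
    move=> x y; rewrite !inE => /orP [/eqP -> | xS] /orP [/eqP -> | yS].
    * by rewrite ei.
    * by have := subsetP sSM y yS; rewrite inE => /andP [_ /andP [_]].
    * by rewrite es; have := subsetP sSM x xS; rewrite inE => /andP [_ /andP [_]].
    * exact: iS.
  + exists S; split; last by right.
    apply/subsetP => x /(subsetP sSM); rewrite inE; by case/andP.
- have [S [sSN [[cS iS] | [cS iS]]]] := IHb _ HN.
  + exists S; split; last by left.
    apply/subsetP => x /(subsetP sSN); rewrite inE; by case/andP.
  + have vS : v \notin S.
      apply/negP => /(subsetP sSN); by rewrite inE eqxx andbF.
    exists (v |: S); split.
      rewrite subUset sub1set vA; apply/subsetP => x /(subsetP sSN).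
      by rewrite inE; case/andP.
    right; split; first by rewrite cardsU1 vS.
    move=> x y; rewrite !inE /compl_rel => /orP [/eqP -> | xS] /orP [/eqP -> | yS].
    * by rewrite eqxx.
    * by have := subsetP sSN y yS; rewrite inE => /andP [_ /andP [_ ->]]; rewrite andbF.
    * by rewrite es; have := subsetP sSN x xS; rewrite inE => /andP [_ /andP [_ ->]]; rewrite andbF.
    * exact: iS.
Qed.

Lemma main_case (T : finType) (r : rel T) (h : nat) (I : {set T}) :
  symmetric r -> irreflexive r -> 0 < h -> indep r I -> 4 * h <= #|I| ->
  (exists x y, r x y) ->
  exists S : {set T}, #|S| = h /\ (induced_star r S \/ induced_one_edge r S).
Proof.
move=> rs ri h0 iI cI [x [y rxy]].
pose nb v := [set u in I | r v u].
case: (boolP [exists v, h.-1 <= #|nb v|]) => [/existsP [v Hv] | Hno]; last first.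
  have Hlt : forall v, #|nb v| < h.-1.
    by move=> v; rewrite ltnNge; apply/negP => H; apply: (negP Hno); apply/existsP; exists v.
  have h2 : 2 <= h by have := Hlt x; lia.
  set K0 := [set u in I | [&& u != x, u != y, ~~ r x u & ~~ r y u]].
  have cK0 : #|I| <= #|K0| + 2 + #|nb x| + #|nb y|.
    have sub : I \subset ((K0 :|: [set x; y]) :|: nb x) :|: nb y.
      apply/subsetP => u uI; rewrite !inE uI /=.
      by case: (u =P x); case: (u =P y); case: (r x u); case: (r y u).
    apply: leq_trans (subset_leq_card sub) _.
    apply: leq_trans (leq_card_setU _ _) _; rewrite leq_add2r.
    apply: leq_trans (leq_card_setU _ _) _; rewrite leq_add2r.
    apply: leq_trans (leq_card_setU _ _) _; rewrite leq_add2l cards2.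
    by case: (x != y).
  have [K sK cK] := @sub_card _ (h - 2) K0 ltac:(have := Hlt x; have := Hlt y; lia).
  have xy : x != y by apply/negP => /eqP E; move: rxy; rewrite E ri.
  have inK u : u \in K -> [/\ u \in I, u != x, u != y, ~~ r x u & ~~ r y u].
    by move=> /(subsetP sK); rewrite inE => /and5P.
  have xK : x \notin K by apply/negP => /inK [_ /eqP].
  have yK : y \notin K by apply/negP => /inK [_ _ /eqP].
  exists (x |: (y |: K)); split.
    by rewrite cardsU1 cardsU1 !inE negb_or xy xK yK cK; lia.
  right; exists x, y; split; rewrite ?inE ?eqxx ?orbT //.
  move=> u w; rewrite !inE => /or3P [/eqP -> | /eqP -> | uK] /or3P [/eqP -> | /eqP -> | wK].
  - by rewrite ri.
  - by left.
  - by case/inK: wK => _ _ _ /negbTE ->.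
  - by right.
  - by rewrite ri.
  - by case/inK: wK => _ _ _ _ /negbTE ->.
  - by rewrite rs; case/inK: uK => _ _ _ /negbTE ->.
  - by rewrite rs; case/inK: uK => _ _ _ _ /negbTE ->.
  - by case/inK: uK => uI _; case/inK: wK => wI _; rewrite (negbTE (iI _ _ uI wI)).
have [K sK cK] := sub_card Hv.
have inK u : u \in K -> u \in I /\ r v u by move=> /(subsetP sK); rewrite inE => /andP.
have vK : v \notin K by apply/negP => /inK [_]; rewrite ri.
exists (v |: K); split; first by rewrite cardsU1 vK cK; lia.
left; exists v; first by rewrite !inE eqxx.
move=> u w; rewrite !inE => /orP [/eqP -> | uK] /orP [/eqP -> | wK] uw.
- by rewrite eqxx in uw.
- by case/inK: wK => _ ->; split => //; left.
- by rewrite rs; case/inK: uK => _ ->; split => //; right.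
- have [uI _] := inK u uK; have [wI _] := inK w wK; rewrite (negbTE (iI _ _ uI wI)).
  split => // -[E|E]; [move: uK | move: wK]; by rewrite E (negbTE vK).
Qed.

Theorem lemma3p8 :
  forall h : nat, 0 < h ->
  exists N : nat,
    forall (T : finType) (e : rel T),
      symmetric e -> irreflexive e ->
      N <= #|T| ->
      (exists x y : T, x != y /\ ~~ e x y) ->
      (exists x y : T, e x y) ->
      exists S : {set T}, #|S| = h /\
        (induced_star e S \/ induced_star (compl_rel e) S \/
         induced_one_edge e S \/ induced_one_edge (compl_rel e) S).
Proof.
move=> h h0; exists (2 ^ (4 * h + 4 * h)) => T e es ei HN [x [y [xy nxy]]] Hedge.
have HA : 2 ^ (4 * h + 4 * h) <= #|[set: T]| by rewrite cardsT.
have [S [_ [[cS iS] | [cS iS]]]] := ramsey es ei HA.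
- have [S' [c [H|H]]] := main_case es ei h0 iS cS Hedge.
  + by exists S'; split => //; left.
  + by exists S'; split => //; right; right; left.
- have cs : symmetric (compl_rel e).
    by move=> u w; rewrite /compl_rel eq_sym es.
  have ci : irreflexive (compl_rel e) by move=> u; rewrite /compl_rel eqxx.
  have [S' [c [H|H]]] := main_case cs ci h0 iS cS ltac:(exists x, y; rewrite /compl_rel xy nxy //).
  + by exists S'; split => //; right; left.
  + by exists S'; split => //; right; right; right.
Qed.
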